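(* A commutative ring $R$ is absolutely flat if and only if the canonical map $\eta:R\to R^{(-1)}R$ is bijective.
   Context: A commutative ring is absolutely flat if every module over it is flat. For $a,b$ in a commutative ring, $b$ is a pointwise inverse of $a$ if $a=a^2b$ and $b=b^2a$. For a subset $S\subseteq R$, $S^{(-1)}R=R[x_s:s\in S]/I$ where $I$ is generated by $sx_s^2-x_s$ and $s^2x_s-s$ ($s\in S$), and $\eta$ is the canonical map; here $S=R$. *)

(* Defs.v *)
From HB Require Import structures.
From mathcomp Require Import all_boot all_order all_algebra.
Set Implicit Arguments. Unset Strict Implicit. Unset Printing Implicit Defensive.
Import GRing.Theory.
Local Open Scope ring_scope.

Definition is_linear (R : pzRingType) (U V : lmodType R) (f : U -> V) : Prop :=
  forall (a : R) (x y : U), f (a *: x + y) = a *: f x + f y.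

Definition is_bilinear (R : pzRingType) (U V W : lmodType R)
    (f : U -> V -> W) : Prop :=
  (forall v : V, is_linear (fun u => f u v)) /\
  (forall u : U, is_linear (f u)).

(* The element  sum_i n_i (x) m_i  of the tensor product N (x)_R M, given by
   the list s = [:: (n_1, m_1); ...; (n_k, m_k)], is zero.  By the universal
   property of the tensor product, this holds iff every R-bilinear map
   f : N x M -> P sends the formal sum to 0 (take P = N (x) M for the
   converse). *)
Definition tensor_zero (R : comPzRingType) (N M : lmodType R)
    (s : seq (N * M)) : Prop :=
  forall (P : lmodType R) (f : N -> M -> P), is_bilinear f ->
    \sum_(p <- s) f p.1 p.2 = 0.

(* M is flat: for every injective R-linear map g : N -> N', the induced map
   g (x) id_M : N (x) M -> N' (x) M is injective (equivalently, since it is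
   linear, has trivial kernel; every element of N (x) M is a finite sum of
   pure tensors). *)
Definition flat (R : comPzRingType) (M : lmodType R) : Prop :=
  forall (N N' : lmodType R) (g : N -> N'), is_linear g -> injective g ->
    forall s : seq (N * M),
      tensor_zero (map (fun p => (g p.1, p.2)) s) -> tensor_zero s.

Definition absolutely_flat (R : comPzRingType) : Prop :=
  forall M : lmodType R, flat M.

Inductive pterm (R : Type) : Type :=
  | TC : R -> pterm R
  | TX : R -> pterm R
  | TAdd : pterm R -> pterm R -> pterm R
  | TOpp : pterm R -> pterm R
  | TMul : pterm R -> pterm R -> pterm R.

(* The congruence on expressions whose quotient is R[x_s : s in R] / I:
   commutative ring axioms, TC a ring morphism (so the quotient by the first
   group of rules is the free commutative R-algebra R[x_s : s in R]), plus
   the generators  s x_s^2 - x_s  and  s^2 x_s - s  of the ideal I. *)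
Inductive pinv_eq (R : comPzRingType) : pterm R -> pterm R -> Prop :=
  | pe_refl t : pinv_eq t t
  | pe_sym t u : pinv_eq t u -> pinv_eq u t
  | pe_trans t u v : pinv_eq t u -> pinv_eq u v -> pinv_eq t v
  | pe_add t t' u u' : pinv_eq t t' -> pinv_eq u u' ->
      pinv_eq (TAdd t u) (TAdd t' u')
  | pe_opp t t' : pinv_eq t t' -> pinv_eq (TOpp t) (TOpp t')
  | pe_mul t t' u u' : pinv_eq t t' -> pinv_eq u u' ->
      pinv_eq (TMul t u) (TMul t' u')
  | pe_addA t u v : pinv_eq (TAdd t (TAdd u v)) (TAdd (TAdd t u) v)
  | pe_addC t u : pinv_eq (TAdd t u) (TAdd u t)
  | pe_add0 t : pinv_eq (TAdd (TC 0) t) t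
  | pe_addN t : pinv_eq (TAdd (TOpp t) t) (TC 0)
  | pe_mulA t u v : pinv_eq (TMul t (TMul u v)) (TMul (TMul t u) v)
  | pe_mulC t u : pinv_eq (TMul t u) (TMul u t)
  | pe_mul1 t : pinv_eq (TMul (TC 1) t) t
  | pe_mulDl t u v : pinv_eq (TMul (TAdd t u) v) (TAdd (TMul t v) (TMul u v))
  | pe_Cadd a b : pinv_eq (TC (a + b)) (TAdd (TC a) (TC b))
  | pe_Cmul a b : pinv_eq (TC (a * b)) (TMul (TC a) (TC b))
  | pe_rel1 s : pinv_eq (TMul (TC s) (TMul (TX s) (TX s))) (TX s)
  | pe_rel2 s : pinv_eq (TMul (TMul (TC s) (TC s)) (TX s)) (TC s).

(* The canonical map eta : R -> R^{(-1)}R, r |-> class of r, is bijective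
   (injective and surjective onto the quotient). *)
Definition eta_bijective (R : comPzRingType) : Prop :=
  (forall a b : R, pinv_eq (TC a) (TC b) -> a = b) /\
  (forall t : pterm R, exists r : R, pinv_eq t (TC r)).

(* Main.v *)
Require Import Defs.
From HB Require Import structures.
From mathcomp Require Import all_boot all_order all_algebra.
From Stdlib Require Import Setoid Morphisms Ring_theory Ring.
Ltac sring := ring.
From mathcomp Require Import ring.
From mathcomp Require Import boolp functions.
Set Implicit Arguments. Unset Strict Implicit. Unset Printing Implicit Defensive.
Import GRing.Theory.
Local Open Scope ring_scope.

Record submod (R : comPzRingType) (V : lmodType R) := SubMod {
  smP :> V -> Prop;
  sm0 : smP 0;
  smD : forall u v, smP u -> smP v -> smP (u + v);
  smZ : forall (a : R) u, smP u -> smP (a *: u) }.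

Section Quot.
Variables (R : comPzRingType) (V : lmodType R) (S : submod V).

Definition cls (v : V) : V -> Prop := fun u => S (u - v).
Record quo := Quo { qset : V -> Prop ; qex : exists v, qset = cls v }.
HB.instance Definition _ := gen_eqMixin quo.
HB.instance Definition _ := gen_choiceMixin quo.

Lemma quo_eq (a b : quo) : qset a = qset b -> a = b.
Proof.
case: a b => [A HA] [B HB] /= E; subst B; congr Quo; exact: Prop_irrelevance.
Qed.

Definition qpi (v : V) : quo := @Quo (cls v) (ex_intro _ v erefl).
Definition qrep (a : quo) : V := proj1_sig (cid (qex a)).
Lemma repP a : qset a = cls (qrep a).
Proof. rewrite /qrep; case: (cid (qex a)) => v h /=; exact: h. Qed.
Lemma pi_rep a : qpi (qrep a) = a.
Proof. by apply: quo_eq; rewrite [RHS]repP. Qed.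

Lemma SN u : S u -> S (- u).
Proof. by move=> h; rewrite -scaleN1r; apply: smZ. Qed.
Lemma SB u v : S u -> S v -> S (u - v).
Proof. by move=> hu hv; apply: smD => //; apply: SN. Qed.

Lemma eq_pi u v : qpi u = qpi v <-> S (u - v).
Proof.
split.
- move/(congr1 qset) => /= E.
  have : cls u u by rewrite /cls subrr; exact: sm0.
  by rewrite E.
- move=> h; apply: quo_eq => /=; apply: funext => x; apply: propext; rewrite /cls; split => hx.
  + have -> : x - v = (x - u) + (u - v) by rewrite addrA subrK.
    exact: smD.
  + have -> : x - u = (x - v) - (u - v) by rewrite opprB addrA subrK.
    exact: SB.
Qed.

Lemma rep_pi v : S (qrep (qpi v) - v).
Proof. by apply/eq_pi; rewrite pi_rep. Qed.

Lemma quo_ind (P : quo -> Prop) : (forall v, P (qpi v)) -> forall a, P a.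
Proof. by move=> h a; rewrite -(pi_rep a). Qed.

Definition qzero := qpi 0.
Definition qadd a b := qpi (qrep a + qrep b).
Definition qopp a := qpi (- qrep a).
Definition qscale (c : R) a := qpi (c *: qrep a).

Lemma qaddE u v : qadd (qpi u) (qpi v) = qpi (u + v).
Proof.
apply/eq_pi.
have -> : qrep (qpi u) + qrep (qpi v) - (u + v) = (qrep (qpi u) - u) + (qrep (qpi v) - v).
  by rewrite opprD addrACA.
by apply: smD; apply: rep_pi.
Qed.
Lemma qoppE u : qopp (qpi u) = qpi (- u).
Proof. by apply/eq_pi; rewrite -opprD; apply: SN; apply: rep_pi. Qed.
Lemma qscaleE c u : qscale c (qpi u) = qpi (c *: u).
Proof. by apply/eq_pi; rewrite -scalerBr; apply: smZ; apply: rep_pi. Qed.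

Lemma qaddA : associative qadd.
Proof. by elim/quo_ind => u; elim/quo_ind => v; elim/quo_ind => w; rewrite !qaddE addrA. Qed.
Lemma qaddC : commutative qadd.
Proof. by elim/quo_ind => u; elim/quo_ind => v; rewrite !qaddE addrC. Qed.
Lemma qadd0 : left_id qzero qadd.
Proof. by elim/quo_ind => u; rewrite /qzero qaddE add0r. Qed.
Lemma qaddN : left_inverse qzero qopp qadd.
Proof. by elim/quo_ind => u; rewrite qoppE qaddE addNr. Qed.

HB.instance Definition _ := GRing.isZmodule.Build quo qaddA qaddC qadd0 qaddN.

Lemma piD u v : qpi (u + v) = qpi u + qpi v.
Proof. by rewrite -qaddE. Qed.

Lemma qscaleA a b v : qscale a (qscale b v) = qscale (a * b) v.
Proof. by elim/quo_ind: v => v; rewrite !qscaleE scalerA. Qed.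
Lemma qscale1 : left_id 1 qscale.
Proof. by elim/quo_ind => v; rewrite qscaleE scale1r. Qed.
Lemma qscaleDr : right_distributive qscale +%R.
Proof. move=> a; elim/quo_ind => u; elim/quo_ind => v. by rewrite -piD !qscaleE -piD scalerDr. Qed.
Lemma qscaleDl v : {morph qscale^~ v : a b / a + b}.
Proof. by elim/quo_ind: v => v a b; rewrite !qscaleE -piD scalerDl. Qed.

HB.instance Definition _ := GRing.Zmodule_isLmodule.Build R quo qscaleA qscale1 qscaleDr qscaleDl.

Lemma piZ (c : R) u : qpi (c *: u) = c *: qpi u.
Proof. by rewrite -qscaleE. Qed.
Lemma pi0 : qpi 0 = 0.
Proof. by []. Qed.
Lemma pi_eq0 u : qpi u = 0 <-> S u.
Proof. by rewrite -pi0 eq_pi subr0. Qed.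

End Quot.

Section Eta.
Variable R : comPzRingType.

Definition is_regular := forall a : R, exists r : R, a = a * a * r.

Lemma pinv_equiv : Equivalence (@pinv_eq R).
Proof. split; [exact: pe_refl| exact: pe_sym | exact: pe_trans]. Qed.

Definition tsub (t u : pterm R) := TAdd t (TOpp u).

Lemma pt_theory : ring_theory (@TC R 0) (@TC R 1) (@TAdd R) (@TMul R) tsub (@TOpp R) (@pinv_eq R).
Proof.
split.
- exact: pe_add0.
- exact: pe_addC.
- exact: pe_addA.
- exact: pe_mul1.
- exact: pe_mulC.
- exact: pe_mulA.
- exact: pe_mulDl.
- move=> x y; exact: pe_refl.
- move=> x; apply: pe_trans (pe_addC _ _) (pe_addN _).
Qed.

Lemma pt_ext : ring_eq_ext (@TAdd R) (@TMul R) (@TOpp R) (@pinv_eq R).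
Proof.
split.
- move=> x x' Hx y y' Hy; exact: pe_add.
- move=> x x' Hx y y' Hy; exact: pe_mul.
- move=> x x' Hx; exact: pe_opp.
Qed.

Existing Instance pinv_equiv.
Instance TAdd_Proper : Proper (@pinv_eq R ==> @pinv_eq R ==> @pinv_eq R) (@TAdd R).
Proof. move=> x x' Hx y y' Hy; exact: pe_add. Qed.
Instance TMul_Proper : Proper (@pinv_eq R ==> @pinv_eq R ==> @pinv_eq R) (@TMul R).
Proof. move=> x x' Hx y y' Hy; exact: pe_mul. Qed.
Instance TOpp_Proper : Proper (@pinv_eq R ==> @pinv_eq R) (@TOpp R).
Proof. move=> x x' Hx; exact: pe_opp. Qed.
Add Ring pt_ring : pt_theory (setoid pinv_equiv pt_ext).


Notation "t ~~ u" := (@pinv_eq R t u) (at level 70).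

Lemma Cmul3 (a b c : R) : TMul (TMul (TC a) (TC b)) (TC c) ~~ TC (a * b * c).
Proof.
apply: pe_sym; apply: pe_trans (pe_Cmul _ _) _.
apply: pe_mul; [exact: pe_Cmul | exact: pe_refl].
Qed.

Lemma Cmul3' (a b c : R) : TMul (TC a) (TMul (TC b) (TC c)) ~~ TC (a * (b * c)).
Proof.
apply: pe_sym; apply: pe_trans (pe_Cmul _ _) _.
apply: pe_mul; [exact: pe_refl | exact: pe_Cmul].
Qed.

(* uniqueness of pointwise inverses in the quotient *)
Lemma TX_eq (s b : R) : s * s * b = s -> s * (b * b) = b -> TX s ~~ TC b.
Proof.
move=> H1 H2.
set x := TX s; set S := TC s; set B := TC b.
have r1 : TMul S (TMul x x) ~~ x by exact: pe_rel1.
have r2 : TMul (TMul S S) x ~~ S by exact: pe_rel2.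
have r3 : TMul (TMul S S) B ~~ S by rewrite /S /B; apply: pe_trans (Cmul3 _ _ _) _; rewrite H1; exact: pe_refl.
have r4 : TMul S (TMul B B) ~~ B by rewrite /S /B; apply: pe_trans (Cmul3' _ _ _) _; rewrite H2; exact: pe_refl.
have e1 : x ~~ TMul (TMul B S) x.
  apply: pe_trans (pe_sym r1) _.
  apply: pe_trans (pe_mul (pe_sym r3) (pe_refl (TMul x x))) _.
  apply: pe_trans _ (pe_mul (pe_refl (TMul B S)) r1).
  sring.
have e2 : B ~~ TMul (TMul x S) B.
  apply: pe_trans (pe_sym r4) _.
  apply: pe_trans (pe_mul (pe_sym r2) (pe_refl (TMul B B))) _.
  apply: pe_trans _ (pe_mul (pe_refl (TMul x S)) r4).
  sring.
apply: pe_trans e1 _; apply: pe_trans _ (pe_sym e2); sring.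
Qed.

Section Reg.
Hypothesis Hreg : is_regular.

Lemma regb (a : R) : exists r, a == a * a * r.
Proof. by case: (Hreg a) => r Hr; exists r; apply/eqP. Qed.

Definition rinv (a : R) : R := let r := xchoose (regb a) in r * r * a.

Lemma rinv1 (a : R) : a * a * rinv a = a.
Proof.
rewrite /rinv; set r := xchoose _; have /eqP Hr := xchooseP (regb a); fold r in Hr.
have -> : a * a * (r * r * a) = (a * a * r) * (a * r) by ring.
rewrite -Hr; have -> : a * (a * r) = a * a * r by ring.
by rewrite -Hr.
Qed.

Lemma rinv2 (a : R) : a * (rinv a * rinv a) = rinv a.
Proof.
rewrite /rinv; set r := xchoose _; have /eqP Hr := xchooseP (regb a); fold r in Hr.
have -> : a * (r * r * a * (r * r * a)) = r * r * r * (a * a * r) * a by ring.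
rewrite -Hr; have -> : r * r * r * a * a = r * r * (a * a * r) by ring.
by rewrite -Hr.
Qed.

Fixpoint eval (t : pterm R) : R :=
  match t with
  | TC r => r
  | TX s => rinv s
  | TAdd t u => eval t + eval u
  | TOpp t => - eval t
  | TMul t u => eval t * eval u
  end.

Lemma eval_eq t u : t ~~ u -> eval t = eval u.
Proof.
elim=> {t u} //=.
- by move=> t u v _ -> _ ->.
- by move=> t t' u u' _ -> _ ->.
- by move=> t t' _ ->.
- by move=> t t' u u' _ -> _ ->.
- by move=> *; rewrite addrA.
- by move=> *; rewrite addrC.
- by move=> *; rewrite add0r.
- by move=> *; rewrite addNr.
- by move=> *; rewrite mulrA.
- by move=> *; rewrite mulrC.
- by move=> *; rewrite mul1r.
- by move=> *; rewrite mulrDl.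
- by move=> s; exact: rinv2.
- by move=> s; exact: rinv1.
Qed.

Lemma reg_eta : eta_bijective R.
Proof.
split; first by move=> a b /eval_eq.
elim.
- by move=> r; exists r; exact: pe_refl.
- by move=> s; exists (rinv s); apply: TX_eq; [exact: rinv1 | exact: rinv2].
- move=> t [a Ha] u [b Hb]; exists (a + b).
  exact: pe_trans (pe_add Ha Hb) (pe_sym (pe_Cadd _ _)).
- move=> t [a Ha]; exists (- a).
  apply: pe_trans (pe_opp Ha) _.
  have h : TAdd (TC (- a)) (TC a) ~~ TC 0.
    apply: pe_trans (pe_sym (pe_Cadd _ _)) _; rewrite addNr; exact: pe_refl.
  apply: pe_trans (pe_sym (pe_add0 _)) _.
  apply: pe_trans (pe_add (pe_sym h) (pe_refl _)) _.
  apply: pe_trans (pe_sym (pe_addA _ _ _)) _.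
  apply: pe_trans (pe_add (pe_refl _) (pe_trans (pe_addC _ _) (pe_addN _))) _.
  apply: pe_trans (pe_addC _ _) (pe_add0 _).
- move=> t [a Ha] u [b Hb]; exists (a * b).
  exact: pe_trans (pe_mul Ha Hb) (pe_sym (pe_Cmul _ _)).
Qed.
End Reg.

Lemma eta_reg : eta_bijective R -> is_regular.
Proof.
case=> Hinj Hsurj a; case: (Hsurj (TX a)) => r Hr; exists r.
apply: Hinj.
apply: pe_trans (pe_sym (pe_rel2 a)) _.
apply: pe_trans (pe_mul (pe_refl _) Hr) _.
exact: Cmul3.
Qed.

End Eta.

Section Lin.
Variables (R : pzRingType) (U V : lmodType R) (f : U -> V).
Hypothesis hf : is_linear f.
Lemma lin0 : f 0 = 0.
Proof.
by have := hf (-1) 0 0; rewrite scaler0 addr0 scaleN1r addNr.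
Qed.
Lemma linD x y : f (x + y) = f x + f y.
Proof. by have := hf 1 x y; rewrite !scale1r. Qed.
Lemma linZ c x : f (c *: x) = c *: f x.
Proof. by have := hf c x 0; rewrite !addr0 lin0 addr0. Qed.
Lemma linB x y : f (x - y) = f x - f y.
Proof. by rewrite -scaleN1r linD linZ scaleN1r. Qed.
Lemma linS (I : Type) (r : seq I) (P : pred I) (F : I -> U) : f (\sum_(i <- r | P i) F i) = \sum_(i <- r | P i) f (F i).
Proof. elim: r => [|i r IH]; first by rewrite !big_nil lin0. rewrite !big_cons; case: (P i) => //; by rewrite linD IH. Qed.
End Lin.

Section FlatReg.
Variable R : comPzRingType.

Definition annS (a : R) : submod R^o.
Proof.
refine (@SubMod _ _ (fun x : R^o => a * x = 0) _ _ _).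
- by rewrite mulr0.
- by move=> u v hu hv; rewrite mulrDr hu hv addr0.
- by move=> c u hu; rewrite /GRing.scale /= mulrCA hu mulr0.
Defined.

Definition multS (a : R) : submod R^o.
Proof.
refine (@SubMod _ _ (fun x : R^o => exists t, x = a * t) _ _ _).
- by exists 0; rewrite mulr0.
- by move=> u v [t ->] [t' ->]; exists (t + t'); rewrite mulrDr.
- by move=> c u [t ->]; exists (c * t); rewrite /GRing.scale /= mulrCA.
Defined.

Lemma flat_reg : absolutely_flat R -> forall a : R, exists r, a = a * a * r.
Proof.
move=> Hf a.
pose N := quo (annS a). pose M := quo (multS a). pose P := quo (multS (a * a)).
have qrepA : forall w : R^o, a * qrep (qpi (annS a) w) = a * w.
  move=> w; have := rep_pi (annS a) w; rewrite /= mulrBr => /eqP; rewrite subr_eq0 => /eqP //.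
pose g : N -> R^o := fun q => a * qrep q.
have gl : is_linear g.
  move=> c; elim/quo_ind => x; elim/quo_ind => y.
  by rewrite -piZ -piD /g !qrepA /GRing.scale /= mulrDr mulrCA.
have gi : injective g.
  elim/quo_ind => x; elim/quo_ind => y; rewrite /g !qrepA => E.
  by apply/eq_pi; rewrite /= mulrBr E subrr.
have H := Hf M N R^o g gl gi [:: (qpi (annS a) 1, qpi (multS a) 1)].
have HF : forall (q1 : N) (q2 : M), exists r, qrep q1 * qrep q2 = r.
  by move=> q1 q2; exists (qrep q1 * qrep q2).
pose F : N -> M -> P := fun q1 q2 => qpi (multS (a * a)) (a * qrep q1 * qrep q2).
have FE : forall x y : R^o, F (qpi _ x) (qpi _ y) = qpi (multS (a * a)) (a * x * y).
  move=> x y; apply/eq_pi.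
  have [k Hk] : exists k, qrep (qpi (annS a) x) = x + k /\ a * k = 0.
    exists (qrep (qpi (annS a) x) - x); split; first by rewrite addrC subrK.
    exact: (rep_pi (annS a) x).
  have [t Ht] : exists t, qrep (qpi (multS a) y) = y + a * t.
    have [t Ht] := rep_pi (multS a) y; exists t; by rewrite -Ht addrC subrK.
  case: Hk => -> Hk; rewrite Ht; exists (x * t).
  have -> : a * (x + k) * (y + a * t) = a * x * y + a * a * (x * t) + (a * k) * (y + a * t) by ring.
  by rewrite Hk mul0r addr0 addrAC subrr add0r.
have Fb : is_bilinear F.
  split.
  - move=> v c; elim/quo_ind => x; elim/quo_ind => y; elim/quo_ind: v => z.
    by rewrite -piZ -piD !FE -piZ -piD /GRing.scale /=; congr qpi; ring.
  - elim/quo_ind => x c; elim/quo_ind => y; elim/quo_ind => z.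
    by rewrite -piZ -piD !FE -piZ -piD /GRing.scale /=; congr qpi; ring.
have T0 : tensor_zero [seq (g p.1, p.2) | p <- [:: (qpi (annS a) 1, qpi (multS a) 1)]].
  move=> P' f [f1 f2].
  rewrite big_seq1 /= /g qrepA mulr1.
  have hh : (a *: (1 : R^o)) = a by rewrite /GRing.scale /= mulr1.
  have h1 := linZ (f1 (qpi (multS a) 1)) a (1 : R^o); rewrite /= hh in h1; rewrite h1.
  have -> : a *: f 1 (qpi (multS a) 1) = f 1 (a *: qpi (multS a) 1) by rewrite (linZ (f2 _)).
  rewrite -piZ.
  have -> : qpi (multS a) (a *: (1 : R^o)) = 0 by apply/pi_eq0; exists 1; rewrite /GRing.scale /=.
  exact: lin0 (f2 _).
have := H T0 P F Fb; rewrite big_seq1 /= FE.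
by rewrite mulr1 mulr1 => /pi_eq0 /= [t Ht]; exists t.
Qed.
End FlatReg.

Section RegFlat.
Variable R : comPzRingType.
Hypothesis Hreg : forall a : R, exists r, a = a * a * r.

Lemma idem_gen (I : eqType) (c : I -> R) (js : seq I) : uniq js ->
  exists u : I -> R, forall j, j \in js -> (\sum_(i <- js) u i * c i) * c j = c j.
Proof.
elim: js => [|j0 js IH] /=; first by move=> _; exists (fun _ => 0) => j.
case/andP => nj0 ujs; have [u' Hu'] := IH ujs.
set f' := \sum_(i <- js) u' i * c i in Hu'.
have ff : f' * f' = f'.
  rewrite {1}/f' mulr_suml; apply: eq_big_seq => i ii; by rewrite -mulrA [c i * _]mulrC Hu'.
set d := c j0 * (1 - f').
have [r0 Hr0] := Hreg d.
have df : d * f' = 0 by rewrite /d -mulrA mulrBl ff mul1r subrr mulr0.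
exists (fun i => if i == j0 then r0 * (1 - f') else u' i) => j.
rewrite big_cons eqxx.
have -> : \sum_(i <- js) (if i == j0 then r0 * (1 - f') else u' i) * c i = f'.
  apply: eq_big_seq => i ii; case: eqP => // E; by move: nj0; rewrite -E ii.
have -> : r0 * (1 - f') * c j0 + f' = r0 * d + f' by rewrite /d; ring.
rewrite inE => /orP [/eqP -> | jj].
- have -> : (r0 * d + f') * c j0 = r0 * c j0 * (d * f') + d * d * r0 + f' * c j0 by rewrite /d; ring.
  by rewrite df mulr0 add0r -Hr0 /d; ring.
- have -> : (r0 * d + f') * c j = r0 * c j0 * (c j - f' * c j) + f' * c j by rewrite /d; ring.
  by rewrite Hu' // subrr mulr0 add0r.
Qed.

Section Core.
Variables (N N' : lmodType R) (g : N -> N').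
Hypotheses (gl : is_linear g) (gi : injective g).

Lemma sumZB (I : Type) (rs : seq I) (a b : I -> R) (v : I -> N) (w : N) :
  \sum_(j <- rs) a j *: (v j - b j *: w) = \sum_(j <- rs) a j *: v j - (\sum_(j <- rs) a j * b j) *: w.
Proof.
rewrite scaler_suml -sumrB; apply: eq_bigr => j _; by rewrite scalerBr scalerA.
Qed.

Lemma sumBZ (V : lmodType R) (I : Type) (rs : seq I) (a b : I -> R) (s : R) (v : I -> V) :
  \sum_(j <- rs) (a j - b j * s) *: v j = \sum_(j <- rs) a j *: v j - s *: \sum_(j <- rs) b j *: v j.
Proof.
rewrite scaler_sumr -sumrB; apply: eq_bigr => j _; by rewrite scalerBl scalerA mulrC.
Qed.

Lemma core (T : eqType) (p : nat) (y : 'I_p -> N') (ks : seq T) :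
  forall (r : 'I_p -> T -> R) (x : T -> N),
  (forall t, t \in ks -> g (x t) = \sum_j r j t *: y j) ->
  exists z : 'I_p -> N, forall t, t \in ks -> x t = \sum_j r j t *: z j.
Proof.
elim: ks => [|t0 ks IH] r x Hx; first by exists (fun _ => 0).
pose c j := r j t0.
have [u Hu] := idem_gen c (index_enum_uniq 'I_p).
pose f := \sum_i u i * c i.
have Hf : forall j, f * c j = c j by move=> j; apply: Hu; exact: mem_index_enum.
pose rho t := \sum_l u l * r l t.
pose r2 j t := r j t - c j * rho t.
pose x2 t := x t - rho t *: x t0.
have Hx0 : g (x t0) = \sum_j c j *: y j by apply: Hx; rewrite mem_head.
have Hx2 : forall t, t \in ks -> g (x2 t) = \sum_j r2 j t *: y j.
  move=> t tk; rewrite /x2 (linB gl) (linZ gl) Hx0 Hx ?inE ?tk ?orbT //.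
  by rewrite /r2 sumBZ.
have [z2 Hz2] := IH r2 x2 Hx2.
have x0f : x t0 = f *: x t0.
  apply: gi; rewrite (linZ gl) Hx0 scaler_sumr; apply: eq_bigr => j _.
  by rewrite scalerA Hf.
pose C := \sum_j c j *: z2 j.
have fC : f *: C = C.
  rewrite /C scaler_sumr; apply: eq_bigr => j _; by rewrite scalerA Hf.
exists (fun j => z2 j - u j *: (C - x t0)) => t.
rewrite inE => /orP [/eqP -> | tks].
- rewrite sumZB -/C.
  have -> : \sum_j c j * u j = f by apply: eq_bigr => j _; rewrite mulrC.
  by rewrite scalerBr fC opprB addrC subrK -x0f.
- rewrite sumZB.
  have -> : \sum_j r j t * u j = rho t by apply: eq_bigr => j _; rewrite mulrC.
  have : x2 t = \sum_j r2 j t *: z2 j by apply: Hz2.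
  rewrite /x2 /r2 sumBZ -/C => /eqP; rewrite subr_eq => /eqP ->.
  by rewrite scalerBr opprB addrA addrAC.
Qed.
End Core.
End RegFlat.

Lemma sum_pred1_seq (T : eqType) (V : nmodType) (ks : seq T) (t0 : T) (F : T -> V) :
  uniq ks -> t0 \in ks -> \sum_(t <- ks | t0 == t) F t = F t0.
Proof.
elim: ks => //= k ks IH /andP [nk uk]; rewrite inE big_cons.
case: (t0 =P k) => [E _ | ne tk].
- subst t0; rewrite ?eqxx big1_seq ?addr0 // => i /andP [/eqP E ii].
  by move: nk; rewrite E ii.
- exact: IH.
Qed.

Lemma collapse (A T : eqType) (V : nmodType) (ks : seq T) (l : seq A) (key : A -> T)
  (F : A -> T -> V) : uniq ks -> (forall q, q \in l -> key q \in ks) ->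
  \sum_(t <- ks) \sum_(q <- l | key q == t) F q t = \sum_(q <- l) F q (key q).
Proof.
move=> uk Hk.
under eq_bigr => t _ do rewrite big_mkcond.
rewrite exchange_big; apply: eq_big_seq => q ql.
rewrite -big_mkcond /=; exact: sum_pred1_seq uk (Hk q ql).
Qed.

Section Tens.
Variables (R : comPzRingType) (M N' : lmodType R).

Lemma fctZ (a : R) (f : M -> N') m : (a *: f) m = a *: f m. Proof. by []. Qed.
Lemma fctD (f g : M -> N') m : (f + g) m = f m + g m. Proof. by []. Qed.
Lemma fctB (f g : M -> N') m : (f - g) m = f m - g m. Proof. by []. Qed.
Lemma fct0 m : (0 : M -> N') m = 0. Proof. by []. Qed.

Definition relv (l : seq (R * M)) : Prop := \sum_(q <- l) q.1 *: q.2 = 0.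
Definition fun_of (w : seq (N' * seq (R * M))) : M -> N' :=
  fun m => \sum_(yl <- w) (\sum_(q <- yl.2 | q.2 == m) q.1) *: yl.1.
Definition Wp (v : M -> N') : Prop :=
  exists w, (forall yl, List.In yl w -> relv yl.2) /\ v = fun_of w.

Lemma Wp0 : Wp 0.
Proof. exists [::]; split => //; apply: funext => m; by rewrite /fun_of big_nil. Qed.

Lemma WpD u v : Wp u -> Wp v -> Wp (u + v).
Proof.
move=> [w1 [h1 ->]] [w2 [h2 ->]]; exists (w1 ++ w2); split.
  by move=> yl H; case: (List.in_app_or _ _ _ H) => H1; [exact: h1 | exact: h2].
by apply: funext => m; rewrite /fun_of big_cat.
Qed.

Lemma WpZ a u : Wp u -> Wp (a *: u).
Proof.
move=> [w [h ->]]; exists (map (fun yl => (a *: yl.1, yl.2)) w); split.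
  move=> yl H; case: (proj1 (List.in_map_iff _ _ _) H) => yl0 [E yi]; rewrite -E; exact: (h yl0 yi).
apply: funext => m; rewrite fctZ /fun_of big_map /= scaler_sumr; apply: eq_bigr => yl _.
by rewrite !scalerA mulrC.
Qed.

Definition Wsub : submod (M -> N') := @SubMod R (M -> N') Wp Wp0 WpD WpZ.

Definition delta (m : M) (n : N') : M -> N' := fun m' => if m == m' then n else 0.
Definition ft (n : N') (m : M) := qpi Wsub (delta m n).

Lemma ft_bil : is_bilinear ft.
Proof.
split.
- move=> m c x y; rewrite /ft -piZ -piD; congr qpi; apply: funext => m' /=.
  have -> : (c *: delta m x + delta m y) m' = c *: delta m x m' + delta m y m' by []. 
  by rewrite /delta; case: ifP => _; rewrite ?scaler0 ?addr0.
- move=> n c m m'; rewrite /ft -piZ -piD; apply/eq_pi.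
  exists [:: (n, [:: (1, c *: m + m'); (-c, m); (-1, m')])]; split.
    move=> yl [<-|//]; rewrite /relv !big_cons big_nil /=.
    by rewrite scale1r scaleNr scaleN1r addr0 -opprD subrr.
  apply: funext => m''.
  transitivity ((if c *: m + m' == m'' then n else 0) - (c *: (if m == m'' then n else 0) + (if m' == m'' then n else 0))); first by [].
  rewrite /fun_of big_cons big_nil addr0 /= !big_cons big_nil /=.
  case: (c *: m + m' == m''); case: (m == m''); case: (m' == m'').
  all: rewrite ?scaler0 ?addr0 ?add0r ?scale0r ?scalerDl ?scalerBl ?scale1r ?scaleNr ?scaleN1r ?subr0 ?sub0r ?opprD ?subrr ?oppr0 ?scale1r ?subrr //.
Qed.
End Tens.

Lemma qpi_sum (R : comPzRingType) (V : lmodType R) (S : submod V) (I : Type) (r : seq I) (F : I -> V) :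
  qpi S (\sum_(i <- r) F i) = \sum_(i <- r) qpi S (F i).
Proof. elim: r => [|i r IH]; first by rewrite !big_nil. by rewrite !big_cons piD IH. Qed.

Lemma fct_sum (R : comPzRingType) (M N' : lmodType R) (I : Type) (r : seq I) (F : I -> M -> N') m :
  (\sum_(i <- r) F i) m = \sum_(i <- r) F i m.
Proof. elim: r => [|i r IH]; first by rewrite !big_nil. by rewrite !big_cons -IH. Qed.

Lemma In_of_mem (T : eqType) (x : T) (s : seq T) : x \in s -> List.In x s.
Proof. elim: s => //= a s IH; rewrite inE => /orP [/eqP ->|h]; [by left|right; exact: IH]. Qed.

Lemma reg_flat (R : comPzRingType) : (forall a : R, exists r, a = a * a * r) -> absolutely_flat R.
Proof.
move=> Hreg M N N' g gl gi s Hs P f [f1 f2].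
have H0 := Hs _ (@ft R M N') (ft_bil M N').
rewrite big_map /= in H0.
have HW : Wp (\sum_(p <- s) delta p.2 (g p.1)).
  apply/(pi_eq0 (Wsub M N')); rewrite qpi_sum; exact: H0.
case: HW => w [Hval Hfun].
have Hpt : forall t, \sum_(p <- s | p.2 == t) g p.1 = fun_of w t.
  by move=> t; rewrite -Hfun fct_sum big_mkcond.
pose ks := undup (map snd s ++ flatten (map (fun yl => map snd yl.2) w)).
have uks : uniq ks by exact: undup_uniq.
pose x0 := ((0 : N'), ([::] : seq (R * M))).
pose y (j : 'I_(size w)) := (nth x0 w j).1.
pose r (j : 'I_(size w)) t := \sum_(q <- (nth x0 w j).2 | q.2 == t) q.1.
pose x t := \sum_(p <- s | p.2 == t) p.1.
have Hx : forall t, t \in ks -> g (x t) = \sum_j r j t *: y j.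
  by move=> t _; rewrite /x (linS gl) Hpt /fun_of (big_nth x0) big_mkord.
have [z Hz] := core Hreg gl gi Hx.
have Lf : forall t (I : Type) (F : I -> N) (rr : seq I) (PP : pred I),
    f (\sum_(i <- rr | PP i) F i) t = \sum_(i <- rr | PP i) f (F i) t.
  by move=> t I F rr PP; exact: (linS (f1 t)).
have Lg : forall u (I : Type) (F : I -> M) (rr : seq I) (PP : pred I),
    f u (\sum_(i <- rr | PP i) F i) = \sum_(i <- rr | PP i) f u (F i).
  by move=> u I F rr PP; exact: (linS (f2 u)).
have eA : \sum_(p <- s) f p.1 p.2 = \sum_(t <- ks) f (x t) t.
  rewrite /x; under [RHS]eq_bigr => t _ do rewrite Lf.
  rewrite (collapse (fun (q : N * M) t => f q.1 t)) //.
  by move=> q qs; rewrite mem_undup mem_cat map_f.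
rewrite eA.
have eB : \sum_(t <- ks) f (x t) t = \sum_j f (z j) (\sum_(t <- ks) r j t *: t).
  rewrite (eq_big_seq (fun t => \sum_j f (r j t *: z j) t)); last first.
    by move=> t tk; rewrite Hz // Lf.
  rewrite exchange_big; apply: eq_bigr => j _; rewrite Lg; apply: eq_bigr => t _.
  by rewrite (linZ (f1 t)) (linZ (f2 (z j))).
rewrite eB big1 // => j _.
have -> : \sum_(t <- ks) r j t *: t = 0.
  under eq_bigr => t _ do rewrite /r scaler_suml.
  rewrite (collapse (fun (q : R * M) t => q.1 *: t)) //.
    apply: Hval; apply: In_of_mem; exact: mem_nth.
  move=> q qj; rewrite mem_undup mem_cat; apply/orP; right.
  apply/flatten_mapP; exists (nth x0 w j); first exact: mem_nth.
  exact: map_f.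
exact: (lin0 (f2 (z j))).
Qed.

Theorem lemma4p6 (R : comPzRingType) :
  absolutely_flat R <-> eta_bijective R.
Proof.
split => H.
- apply: reg_eta; exact: flat_reg.
- apply: reg_flat; exact: eta_reg.
Qed.
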